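(* \[\inf_{F\in\Delta_{L^1}(\mathbb{R}_+)}\ \sup_{p\in\mathbb{R}_+}\frac{\mathsf{W}(p,F)}{\mathsf{OPT\text{-}W}(F)}\ \ge\ \frac{2+\sqrt2}{4}.\]
   Context: Symmetric bilateral trade: $B,S$ i.i.d. with distribution $F$; posting price $p$, trade iff $B>p\ge S$. $\mathsf{W}(p,F)=\mathbb{E}[S]+\mathbb{E}[(B-S)\mathbf 1_{B>p\ge S}]$, $\mathsf{OPT\text{-}W}(F)=\mathbb{E}[\max\{B,S\}]$. $\Delta_{L^1}(\mathbb{R}_+)$ denotes probability distributions on $[0,\infty)$ with finite, nonzero mean. *)

(* Defs.v *)
From HB Require Import structures.
From mathcomp Require Import all_boot all_order all_algebra.
From mathcomp Require Import all_classical all_reals all_analysis.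
Set Implicit Arguments. Unset Strict Implicit. Unset Printing Implicit Defensive.
Import Order.TTheory GRing.Theory Num.Theory.
Local Open Scope classical_set_scope.
Local Open Scope ring_scope.

(* F is a probability distribution on the real line (Borel sets);
   B, S are i.i.d. with law F, so (B,S) has law F \x F. *)

Definition welfare (R : realType) (F : probability R R) (p : R) : \bar R :=
  ((\int[F]_x x%:E) +
   \int[F \x F]_z (if (p < z.1) && (z.2 <= p) then z.1 - z.2 else 0)%:E)%E.

Definition opt_welfare (R : realType) (F : probability R R) : \bar R :=
  (\int[F \x F]_z (Num.max z.1 z.2)%:E)%E.

Definition in_DeltaL1 (R : realType) (F : probability R R) : Prop :=
  F `[0%R, +oo[%classic = 1%E /\
  F.-integrable setT (fun x => x%:E) /\
  (\int[F]_x x%:E)%E <> 0%E.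

Definition best_ratio (R : realType) (F : probability R R) : \bar R :=
  ereal_sup [set (fine (welfare F p) / fine (opt_welfare F))%:E
            | p in `[0%R, +oo[%classic].

(* Main.v *)
Require Import Defs.
From HB Require Import structures.
From mathcomp Require Import all_boot all_order all_algebra.
From mathcomp Require Import all_classical all_reals all_analysis.
From mathcomp Require Import measurable_realfun.
From mathcomp Require Import ring lra.
Set Implicit Arguments. Unset Strict Implicit. Unset Printing Implicit Defensive.
Import Order.TTheory GRing.Theory Num.Theory.
Import numFieldNormedType.Exports.
Local Open Scope classical_set_scope.
Local Open Scope ring_scope.

Section LC.
Context d (T : measurableType d) (R : realType).

Lemma mset_le (u v : T -> R) : measurable_fun setT u -> measurable_fun setT v ->
  measurable [set z | u z <= v z].
Proof. move=> mu mv; rewrite -[X in measurable X]setTI; exact: measurable_fun_le. Qed.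

Lemma mset_lt (u v : T -> R) : measurable_fun setT u -> measurable_fun setT v ->
  measurable [set z | u z < v z].
Proof.
move=> mu mv; rewrite (_ : [set z | _] = ~` [set z | v z <= u z]).
  exact/measurableC/mset_le.
by apply/seteqP; split=> z /=; rewrite ltNge => /negP.
Qed.

End LC.
Section LC2.
Context d (T : measurableType d) (R : realType).
Variable mu : {sigma_finite_measure set T -> \bar R}.
Local Notation leb := (@lebesgue_measure R).

Lemma LC (u v : T -> R) (A : set T) : measurable A ->
  measurable_fun setT u -> measurable_fun setT v ->
  (\int[mu]_z (\1_A z * Num.max (v z - u z) 0)%:E =
   \int[leb]_t mu (A `&` [set z | (u z <= t < v z)%R]))%E.
Proof.
move=> mA mu' mv.
pose S : set (T * measurableTypeR R) := (A `*` setT) `&` [set w : T * R | u w.1 <= w.2] `&` [set w | w.2 < v w.1].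
have mS : measurable S.
  apply: measurableI; first apply: measurableI.
  - exact: measurableX.
  - apply: mset_le; [exact: measurableT_comp | exact: measurable_snd].
  - apply: mset_lt; [exact: measurable_snd | exact: measurableT_comp].
pose f := fun w : T * measurableTypeR R => ((\1_S w : R))%:E.
have mf : measurable_fun [set: T * measurableTypeR R] f by apply/measurable_EFinP; exact: measurable_indic.
have f0 w : (0 <= f w)%E by rewrite lee_fin indicE; case: (_ \in _).
have := @fubini_tonelli _ _ _ _ _ mu leb f mf f0.
rewrite /fubini_F /fubini_G /= => E.
transitivity (\int[mu]_x \int[leb]_y f (x, y))%E.
  apply: eq_integral => x _.
  have -> : (fun y => f (x, y)) = (fun y => (\1_(if x \in A then `[u x, v x[%classic else set0) y : R)%:E).
    apply/funext => y; rewrite /f !indicE /S /=; congr ((nat_of_bool _)%:R%:E).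
    case: ifPn => xA.
      apply/idP/idP => /set_mem.
        by move=> [[[_ _]] /= ? ?]; apply/mem_set; rewrite /= in_itv /=; apply/andP.
      rewrite /= in_itv /= => /andP[? ?]; apply/mem_set; split => //; split => //.
      by split => //; exact: set_mem.
    apply/idP/idP => /set_mem //= [[[]]] /= /mem_set.
    by rewrite (negbTE xA).
  rewrite integral_indic //; last by case: ifP.
  rewrite setIT; case: ifPn => xA.
    rewrite indicE xA mul1r /=.
    have L := lebesgue_measure_itv `[u x, v x[; rewrite /= in L; rewrite L lte_fin.
    case: ltP => h.
      by rewrite max_l ?subr_ge0 ?ltW// EFinD EFinN.
    by rewrite max_r // subr_le0.
  by rewrite measure0 indicE (negbTE xA) mul0r.
apply: (eq_trans E); apply: eq_integral => t _.
have -> : (fun x => f (x, t)) = (fun x => (\1_(A `&` [set z | (u z <= t < v z)%R]) x : R)%:E).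
  apply/funext => x; rewrite /f !indicE /S /=; congr ((nat_of_bool _)%:R%:E).
  apply/idP/idP => /set_mem /=.
    by move=> [[[? _] ? ?]]; apply/mem_set; split => //; apply/andP.
  by move=> [? /andP[? ?]]; apply/mem_set.
rewrite integral_indic ?setIT //; apply: measurableI => //.
rewrite (_ : [set z | _] = [set z | u z <= t] `&` [set z | t < v z]).
  by apply: measurableI; [apply: mset_le | apply: mset_lt].
by apply/seteqP; split => z /=; [move=> /andP|move=> [? ?]; apply/andP].
Qed.
End LC2.

Section Alg.
Variable R : realType.
Local Notation s := (Num.sqrt (2:R)).
Lemma s2 : s ^+ 2 = 2. Proof. by rewrite sqr_sqrtr. Qed.
Lemma s0 : 0 <= s. Proof. exact: sqrtr_ge0. Qed.

Lemma s15 : s <= 3/2. 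
Proof. have := s2; have := s0; nra. Qed.

Lemma alg1 (g : R) : 0 <= g <= 1 -> (2 + s) / 4 * (1 - g ^+ 2) <= 1 - s / 2 * g.
Proof. move=> /andP[g0 g1]; have := s2; have := s0; have := sqr_ge0 ((2 + s) * g - s); nra. Qed.

Lemma alg2 (g : R) : 0 <= g <= 1 -> (2 + s) / 4 * (1 - g ^+ 2) <= 1.
Proof. move=> /andP[g0 g1]; have := s15; have := s0; nra. Qed.

Lemma alg3 (g qb : R) : 0 <= g <= 1 -> s / 2 <= qb ->
  (2 + s) / 4 * (1 - g ^+ 2) <= (1 - g) + (1 - g) * qb.
Proof.
move=> /andP[g0 g1] h; have := s0 => h0.
have h1 : 0 <= (1 - g) * (qb - s / 2) by apply: mulr_ge0; lra.
have h2 : 0 <= (1 - g) * (1 - g) * (2 + s) by apply: mulr_ge0; [apply: mulr_ge0|]; lra.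
nra.
Qed.
End Alg.

Section Main.
Variables (R : realType) (F : probability R R).
Local Notation leb := (@lebesgue_measure R).

Definition G (t : R) : R := fine (F `]-oo, t]%classic).

Lemma FG t : F `]-oo, t]%classic = (G t)%:E.
Proof. by rewrite /G fineK // fin_num_measure. Qed.

Lemma G_ge0 t : 0 <= G t.
Proof. by rewrite -lee_fin -FG. Qed.

Lemma G_le1 t : G t <= 1.
Proof. by rewrite -lee_fin -FG probability_le1. Qed.

Lemma G_nd : {homo G : x y / x <= y}.
Proof.
move=> x y xy; rewrite -lee_fin -!FG; apply: le_measure; rewrite ?inE //.
by move=> z /=; rewrite !in_itv /= => /le_trans; apply.
Qed.

Lemma Fgt t : F `]t, +oo[%classic = (1 - G t)%:E.
Proof.
rewrite -setCitvl probability_setC // FG //.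
Qed.

Lemma mG : measurable_fun setT G.
Proof. exact: nondecreasing_measurable G_nd. Qed.

Hypothesis supp : F `[0%R, +oo[%classic = 1%E.

Lemma Fneg : F `]-oo, 0[%classic = 0%E.
Proof.
have := probability_setC F (measurable_itv `[0%R, +oo[).
by rewrite supp subee // setCitvr.
Qed.

Lemma G_neg t : t < 0 -> G t = 0.
Proof.
move=> t0; apply/eqP; rewrite eq_le G_ge0 andbT -lee_fin -FG.
apply: (@le_trans _ _ (F `]-oo, 0[%classic)); last by rewrite Fneg.
apply: le_measure; rewrite ?inE //.
by move=> z /=; rewrite !in_itv /= => /le_lt_trans; apply.
Qed.


Definition a (t : R) : R := \1_(`[0%R, +oo[%classic) t * (1 - G t).

Lemma IA : (\int[F]_x x%:E = \int[leb]_t (a t)%:E)%E.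
Proof.
transitivity (\int[F]_x (\1_setT x * Num.max (x - 0) 0)%:E)%E.
  apply: ae_eq_integral => //.
  - apply/measurable_EFinP; apply: measurable_funM; first exact: measurable_indic.
    by apply: measurable_maxr => //; apply: measurable_funB.
  exists `]-oo, 0[%classic; split => //; first exact: Fneg.
  move=> x /= H; rewrite in_itv /=; apply: contrapT => x0.
  apply: H => _; rewrite indicE mem_set // mul1r subr0 max_l //.
  by rewrite leNgt; apply/negP.
rewrite (@LC _ _ _ F (cst 0) id setT measurableT) //.
apply: eq_integral => t _; rewrite setTI /a indicE.
case: (boolP (t \in _)) => t0.
  rewrite mul1r -Fgt; congr (F _); apply/seteqP; split => x /=; rewrite in_itv /= andbT.
    by case/andP.
  by move=> tx; apply/andP; split => //; move/set_mem: t0; rewrite /= in_itv /= andbT.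
rewrite mul0r (_ : [set _ | _] = set0) ?measure0 //.
apply/seteqP; split => x //= /andP[t0' _]; move: t0; apply: contraNP => _.
by apply/mem_set; rewrite /= in_itv /= t0'.
Qed.


Definition b (p t : R) : R := (1 - G (Num.max t p)) * G (Num.min t p).

Lemma IB p : (\int[F \x F]_z (if (p < z.1) && (z.2 <= p) then z.1 - z.2 else 0)%:E
  = \int[leb]_t (b p t)%:E)%E.
Proof.
pose A : set (R * R) := [set z | p < z.1] `&` [set z | z.2 <= p].
have mA : measurable A.
  apply: measurableI.
    by apply: mset_lt => //; exact: measurable_fst.
  by apply: mset_le => //; exact: measurable_snd.
transitivity (\int[F \x F]_z (\1_A z * Num.max (z.1 - z.2) 0)%:E)%E.
  apply: eq_integral => z _; rewrite indicE; case: ifPn => /andP.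
    move=> [pz1 z2p]; rewrite mem_set // mul1r max_l // subr_ge0.
    exact: ltW (le_lt_trans z2p pz1).
  move=> H; rewrite memNset ?mul0r //.
pose P2 : probability _ R := (F \x F)%E.
rewrite (@LC _ _ _ P2 snd fst A mA); last 2 first.
  exact: measurable_snd.
  exact: measurable_fst.
apply: eq_integral => t _.
rewrite (_ : _ `&` _ = `](Num.max t p), +oo[%classic `*` `]-oo, (Num.min t p)]%classic).
  rewrite /P2 /= product_measure1E //.
  apply: (@eq_trans _ _ ((1 - G (Num.max t p))%:E * (G (Num.min t p))%:E)%E).
    by congr (_ * _)%E; [exact: Fgt | exact: FG].
  by rewrite /b -EFinM.
apply/seteqP; split => z /=.
  move=> [[pz1 z2p] /andP[tz2 z1t]]; rewrite !in_itv /= andbT gt_max le_min.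
  by rewrite pz1 z1t z2p tz2.
rewrite !in_itv /= andbT gt_max le_min => -[/andP[tz1 pz1] /andP[z2t z2p]].
by split => //; apply/andP.
Qed.


Definition c (t : R) : R := \1_(`[0%R, +oo[%classic) t * (1 - G t ^+ 2).

Lemma IC : (\int[F \x F]_z (Num.max z.1 z.2)%:E = \int[leb]_t (c t)%:E)%E.
Proof.
pose P2 : probability _ R := (F \x F)%E.
have mv : measurable_fun setT (fun z : R * R => Num.max z.1 z.2).
  by apply: measurable_maxr; [exact: measurable_fst | exact: measurable_snd].
transitivity (\int[P2]_z (\1_setT z * Num.max (Num.max z.1 z.2 - 0) 0)%:E)%E.
  apply: ae_eq_integral => //.
  - exact/measurable_EFinP.
  - apply/measurable_EFinP; apply: measurable_funM; first exact: measurable_indic.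
    by apply: measurable_maxr => //; apply: measurable_funB.
  exists (`]-oo, 0[%classic `*` setT); split => //.
    exact: measurableX.
  - rewrite /= product_measure1E //.
    apply: (@eq_trans _ _ (0%E * F setT)%E); last exact: mul0e.
    by congr (_ * _)%E; exact: Fneg.
  - move=> z /= H; split => //; rewrite in_itv /=; apply: contrapT => z0.
    apply: H => _; rewrite indicE mem_set // mul1r subr0 [in RHS]max_l //.
    by rewrite le_max; apply/orP; left; rewrite leNgt; apply/negP.
rewrite (@LC _ _ _ P2 (cst 0) (fun z : R * R => Num.max z.1 z.2) setT measurableT) //.
apply: eq_integral => t _; rewrite setTI /c indicE.
case: (boolP (t \in _)) => t0.
  have t0' : 0 <= t by move/set_mem: t0; rewrite /= in_itv /= andbT.
  rewrite mul1r (_ : [set _ | _] = ~` (`]-oo, t]%classic `*` `]-oo, t]%classic)).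
    apply: (@eq_trans _ _ (1 - P2 (`]-oo, t]%classic `*` `]-oo, t]%classic))%E).
      by apply: probability_setC; apply: measurableX.
    rewrite /P2 /= product_measure1E //.
    apply: (@eq_trans _ _ (1 - (G t)%:E * (G t)%:E)%E).
      by congr (_ - (_ * _))%E; exact: FG.
    by rewrite -EFinM -EFinB expr2.
  apply/seteqP; split => z /=.
    move=> /andP[_ tz]; rewrite !in_itv /= => -[z1t z2t].
    by move: tz; rewrite lt_max !ltNge z1t z2t.
  rewrite !in_itv /= => H; apply/andP; split => //.
  rewrite lt_max !ltNge -negb_and; apply/negP => /andP[z1t z2t].
  by apply: H.
rewrite mul0r (_ : [set _ | _] = set0) ?measure0 //.
apply/seteqP; split => x //= /andP[t0' _]; move: t0; apply: contraNP => _.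
by apply/mem_set; rewrite /= in_itv /= t0'.
Qed.


Lemma b_ge0 p t : 0 <= b p t.
Proof. by apply: mulr_ge0; [rewrite subr_ge0 G_le1|exact: G_ge0]. Qed.
Lemma a_ge0 t : 0 <= a t.
Proof. by apply: mulr_ge0; [rewrite indicE; case: (_ \in _)|rewrite subr_ge0 G_le1]. Qed.
Lemma indic_ge0 (A : set R) t : 0 <= \1_A t :> R.
Proof. by rewrite indicE; case: (_ \in _). Qed.

Local Notation s := (Num.sqrt (2:R)).

Lemma key (p1 p2 lam t : R) : 0 <= p1 -> p1 <= p2 -> 0 <= lam <= 1 ->
  s / 2 <= lam * G p1 + (1 - lam) * G p2 ->
  (0 < p1 -> lam * G p1 + (1 - lam) * G p2 <= s / 2) ->
  (2 + s) / 4 * c t <= a t + lam * b p1 t + (1 - lam) * b p2 t + \1_(`[p1, p2[%classic) t.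
Proof.
move=> p10 p12 /andP[l0 l1] hq1 hq2.
have hb1 := b_ge0 p1 t; have hb2 := b_ge0 p2 t; have ha := a_ge0 t.
have hi := indic_ge0 `[p1, p2[%classic t.
have hg0 := G_ge0 t; have hg1 := G_le1 t.
have l1' : 0 <= 1 - lam by lra.
have hlb1 : 0 <= lam * b p1 t by apply: mulr_ge0.
have hlb2 : 0 <= (1 - lam) * b p2 t by apply: mulr_ge0.
have [t0|t0] := ltP t 0.
  rewrite /c indicE memNset ?mul0r ?mulr0; first lra.
  by rewrite /= in_itv /= andbT leNgt t0.
have ct : c t = 1 - G t ^+ 2 by rewrite /c indicE mem_set ?mul1r //= in_itv /= t0.
have at' : a t = 1 - G t by rewrite /a indicE mem_set ?mul1r //= in_itv /= t0.
rewrite ct at'.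
have [tp1|tp1] := ltP t p1.
  have p1pos : 0 < p1 by apply: le_lt_trans tp1.
  have hq := hq2 p1pos.
  have -> : b p1 t = (1 - G p1) * G t by rewrite /b max_r ?min_l // ltW.
  have -> : b p2 t = (1 - G p2) * G t.
    by rewrite /b max_r ?min_l // ltW // (lt_le_trans tp1 p12).
  have E : lam * ((1 - G p1) * G t) + (1 - lam) * ((1 - G p2) * G t) =
    G t - (lam * G p1 + (1 - lam) * G p2) * G t by ring.
  have := @alg1 R (G t); rewrite hg0 hg1 /= => H.
  have qb : lam * G p1 + (1 - lam) * G p2 = s / 2 by lra.
  rewrite qb in E; lra.
have [tp2|tp2] := ltP t p2.
  have -> : \1_(`[p1, p2[%classic) t = 1 :> R.
    by rewrite indicE mem_set //= in_itv /= tp1 tp2.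
  have := @alg2 R (G t); rewrite hg0 hg1 /= => H; lra.
have -> : b p1 t = (1 - G t) * G p1 by rewrite /b max_l ?min_r // (le_trans p12 tp2).
have -> : b p2 t = (1 - G t) * G p2 by rewrite /b max_l ?min_r.
have := @alg3 R (G t) (lam * G p1 + (1 - lam) * G p2); rewrite hg0 hg1 /= => /(_ isT hq1) H.
have E : lam * ((1 - G t) * G p1) + (1 - lam) * ((1 - G t) * G p2) =
    (1 - G t) * (lam * G p1 + (1 - lam) * G p2) by ring.
lra.
Qed.


Lemma ma : measurable_fun setT a.
Proof.
apply: measurable_funM; first exact: measurable_indic.
by apply: measurable_funB => //; exact: mG.
Qed.

Lemma mc : measurable_fun setT c.
Proof.
apply: measurable_funM; first exact: measurable_indic.
by apply: measurable_funB => //; apply: measurable_funX; exact: mG.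
Qed.

Lemma mb p : measurable_fun setT (b p).
Proof.
apply: measurable_funM.
  apply: measurable_funB => //; apply: nondecreasing_measurable => // x y xy.
  apply: G_nd; rewrite ge_max le_max xy /= le_max lexx orbT //.
apply: nondecreasing_measurable => // x y xy.
apply: G_nd; rewrite le_min ge_min xy /= ge_min lexx orbT //.
Qed.

Lemma b_le_a p t : 0 <= p -> b p t <= a t.
Proof.
move=> p0; have [t0|t0] := ltP t 0.
  by rewrite /b (min_l (ltW (lt_le_trans t0 p0))) (G_neg t0) mulr0 a_ge0.
rewrite /a indicE mem_set ?mul1r; last by rewrite /= in_itv /= t0.
apply: (@le_trans _ _ (1 - G (Num.max t p))).
  by rewrite /b ler_piMr ?G_le1 // subr_ge0 G_le1.
by rewrite lerB // G_nd // le_max lexx.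
Qed.

Lemma a_le_c t : a t <= c t.
Proof.
rewrite /a /c; apply: ler_wpM2l; first exact: indic_ge0.
have := G_ge0 t; have := G_le1 t; nra.
Qed.

Lemma c_le_2a t : c t <= 2 * a t.
Proof.
rewrite /a /c mulrCA; apply: ler_wpM2l; first exact: indic_ge0.
have := G_ge0 t; have := G_le1 t; nra.
Qed.


Lemma G_large (y dl : R) : y < 1 -> 0 < dl -> exists n : nat, y <= G (n%:R * dl).
Proof.
move=> y1 d0.
pose S := fun n : nat => `]-oo, n%:R * dl]%classic.
have mS n : measurable (S n) by exact: measurable_itv.
have US : \bigcup_n S n = setT.
  apply/seteqP; split => // x _.
  exists (Num.truncn (x / dl)).+1 => //=; rewrite /S /= in_itv /=.
  rewrite -ler_pdivrMr //; apply: ltW; exact: truncnS_gt.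
have ndS : nondecreasing_seq S.
  move=> m n mn; apply/subsetPset => x; rewrite /S /= !in_itv /= => /le_trans; apply.
  by rewrite ler_pM2r // ler_nat.
have h1 := nondecreasing_cvg_mu mS (ltac:(by rewrite US)) ndS.
have h1' : (F \o S) @ \oo --> (1%E : \bar R).
  by rewrite -(probability_setT F) -US; exact: h1.
have ndF : nondecreasing_seq (F \o S).
  by move=> m n mn; apply: le_measure; rewrite ?inE //; apply/subsetPset/ndS.
have h2 := ereal_nondecreasing_cvgn ndF.
have E : ereal_sup (range (F \o S)) = 1%E.
  exact: (cvg_unique _ h2 h1').
have : (y%:E < ereal_sup (range (F \o S)))%E by rewrite E lte_fin.
move=> /ereal_sup_gt [_ [n _ <-]] /= H.
by exists n; rewrite -lee_fin -FG; apply: ltW.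
Qed.


Lemma choose (dl : R) : 0 < dl -> exists p1 p2 lam : R,
  [/\ 0 <= p1, p1 <= p2, p2 - p1 <= dl, 0 <= lam <= 1 &
   (s / 2 <= lam * G p1 + (1 - lam) * G p2 /\
   (0 < p1 -> lam * G p1 + (1 - lam) * G p2 <= s / 2))].
Proof.
move=> d0; have hs := @s15 R; have hs0 := @s0 R.
have [G0|G0] := leP (s / 2) (G 0).
  exists 0, 0, 1; split => //; first by rewrite subrr ltW.
    by rewrite ler01 lexx.
  split; first by rewrite mul1r subrr mul0r addr0.
  by rewrite ltxx.
have [n Hn] := G_large (ltac:(lra) : s / 2 < 1) d0.
have Hex : exists n : nat, s / 2 <= G (n%:R * dl) by exists n.
case: (ex_minnP Hex) => j Pj jmin.
case: j Pj jmin => [|k] Pk kmin.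
  by move: Pk; rewrite mul0r leNgt G0.
have q1 : G (k%:R * dl) < s / 2.
  rewrite ltNge; apply/negP => H; have := kmin k H; by rewrite ltnn.
have q12 : G (k%:R * dl) < G (k.+1%:R * dl) by apply: lt_le_trans Pk.
pose q1' := G (k%:R * dl); pose q2' := G (k.+1%:R * dl).
exists (k%:R * dl), (k.+1%:R * dl), ((q2' - s / 2) / (q2' - q1')).
have dq : 0 < q2' - q1' by rewrite subr_gt0.
split.
- by apply: mulr_ge0 => //; exact: ltW.
- by rewrite ler_pM2r // ler_nat.
- by rewrite -mulrBl -natrB // subSnn mul1r.
- apply/andP; split.
    by apply: divr_ge0; rewrite /q1' /q2' in dq *; lra.
  by rewrite ler_pdivrMr // mul1r; rewrite /q1' /q2' in dq *; lra.
- have -> : (q2' - s / 2) / (q2' - q1') * q1' + (1 - (q2' - s / 2) / (q2' - q1')) * q2' = s / 2.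
    by field; rewrite subr_eq0 gt_eqF.
  by split => //.
Qed.


Hypothesis integ : F.-integrable setT (fun x => x%:E).
Hypothesis nz : (\int[F]_x x%:E)%E <> 0%E.

Local Notation Ia := (\int[leb]_t (a t)%:E)%E.
Local Notation Ib p := (\int[leb]_t (b p t)%:E)%E.
Local Notation Ic := (\int[leb]_t (c t)%:E)%E.

Lemma mEa : measurable_fun setT (fun t => (a t)%:E).
Proof. by apply/measurable_EFinP; exact: ma. Qed.
Lemma mEb p : measurable_fun setT (fun t => (b p t)%:E).
Proof. by apply/measurable_EFinP; exact: mb. Qed.
Lemma mEc : measurable_fun setT (fun t => (c t)%:E).
Proof. by apply/measurable_EFinP; exact: mc. Qed.

Lemma Ia_ge0 : (0 <= Ia)%E.
Proof. by apply: integral_ge0 => t _; rewrite lee_fin a_ge0. Qed.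

Lemma Ia_fin : Ia \is a fin_num.
Proof. by rewrite -IA; exact: integrable_fin_num. Qed.

Lemma Ia_gt0 : 0 < fine Ia.
Proof.
rewrite -lte_fin fineK ?Ia_fin // lt_neqAle Ia_ge0 andbT eq_sym.
by apply/eqP; rewrite -IA.
Qed.

Lemma Ib_ge0 p : (0 <= Ib p)%E.
Proof. by apply: integral_ge0 => t _; rewrite lee_fin b_ge0. Qed.

Lemma Ib_le p : 0 <= p -> (Ib p <= Ia)%E.
Proof.
move=> p0; apply: ge0_le_integral => //.
- by move=> t _; rewrite lee_fin b_ge0.
- exact: mEb.
- exact: mEa.
- by move=> t _; rewrite lee_fin b_le_a.
Qed.

Lemma Ib_fin p : 0 <= p -> Ib p \is a fin_num.
Proof.
move=> p0; rewrite ge0_fin_numE ?Ib_ge0 //.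
apply: le_lt_trans (Ib_le p0) _; rewrite -ge0_fin_numE ?Ia_ge0 //; exact: Ia_fin.
Qed.

Lemma Ia_le_Ic : (Ia <= Ic)%E.
Proof.
apply: ge0_le_integral => //.
- by move=> t _; rewrite lee_fin a_ge0.
- exact: mEa.
- exact: mEc.
- by move=> t _; rewrite lee_fin a_le_c.
Qed.

Lemma Ic_fin : Ic \is a fin_num.
Proof.
rewrite ge0_fin_numE; last exact: le_trans Ia_ge0 Ia_le_Ic.
apply: (@le_lt_trans _ _ (\int[leb]_t ((2:R)%:E * (a t)%:E))%E).
  apply: ge0_le_integral => //.
  - by move=> t _; apply: le_trans (a_le_c t); rewrite a_ge0.
  - exact: mEc.
  - by apply: emeasurable_funM => //; exact: mEa.
  - by move=> t _; rewrite -EFinM lee_fin c_le_2a.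
rewrite ge0_integralZl_EFin //; last exact: mEa.
  by rewrite -(fineK Ia_fin) -EFinM ltry.
by move=> t _; rewrite lee_fin a_ge0.
Qed.


Lemma intD (f g : R -> R) : measurable_fun setT f -> measurable_fun setT g ->
  (forall t, 0 <= f t) -> (forall t, 0 <= g t) ->
  (\int[leb]_t (f t + g t)%:E = \int[leb]_t (f t)%:E + \int[leb]_t (g t)%:E)%E.
Proof.
move=> mf mg f0 g0.
under eq_integral do rewrite EFinD.
apply: ge0_integralD => //.
- by move=> t _; rewrite lee_fin.
- exact/measurable_EFinP.
- by move=> t _; rewrite lee_fin.
- exact/measurable_EFinP.
Qed.

Lemma intZ (k : R) (f : R -> R) : 0 <= k -> measurable_fun setT f ->
  (forall t, 0 <= f t) ->
  (\int[leb]_t (k * f t)%:E = k%:E * \int[leb]_t (f t)%:E)%E.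
Proof.
move=> k0 mf f0.
under eq_integral do rewrite EFinM.
apply: ge0_integralZl_EFin => //.
- by move=> t _; rewrite lee_fin.
- exact/measurable_EFinP.
Qed.

Lemma int_ind (p1 p2 : R) : p1 <= p2 ->
  (\int[leb]_t (\1_(`[p1, p2[%classic) t : R)%:E = (p2 - p1)%:E)%E.
Proof.
move=> p12; rewrite integral_indic // setIT.
have L := lebesgue_measure_itv `[p1, p2[; rewrite /= in L.
apply: (eq_trans L); rewrite lte_fin.
case: ltP => h; first by rewrite EFinB.
have E : p1 = p2 by apply/eqP; rewrite eq_le p12 h.
by rewrite E subrr.
Qed.

Lemma comb (p1 p2 lam : R) : 0 <= p1 -> p1 <= p2 -> 0 <= lam <= 1 ->
  s / 2 <= lam * G p1 + (1 - lam) * G p2 ->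
  (0 < p1 -> lam * G p1 + (1 - lam) * G p2 <= s / 2) ->
  (2 + s) / 4 * fine Ic <=
  fine Ia + lam * fine (Ib p1) + (1 - lam) * fine (Ib p2) + (p2 - p1).
Proof.
move=> p10 p12 /andP[l0 l1] hq1 hq2.
have l1' : 0 <= 1 - lam by rewrite subr_ge0.
have cs0 : 0 <= (2 + s) / 4 by apply: divr_ge0 => //; apply: addr_ge0 => //; exact: s0.
have p20 : 0 <= p2 by exact: le_trans p12.
have mi : measurable_fun setT (\1_(`[p1, p2[%classic) : R -> R).
  exact: measurable_indic.
have mlb1 : measurable_fun setT (fun t => lam * b p1 t).
  by apply: measurable_funM => //; exact: mb.
have mlb2 : measurable_fun setT (fun t => (1 - lam) * b p2 t).
  by apply: measurable_funM => //; exact: mb.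
have H : (\int[leb]_t ((2 + s) / 4 * c t)%:E <=
  \int[leb]_t (a t + lam * b p1 t + (1 - lam) * b p2 t + \1_(`[p1, p2[%classic) t)%:E)%E.
  apply: ge0_le_integral => //.
  - by move=> t _; rewrite lee_fin; apply: mulr_ge0 => //; apply: le_trans (a_le_c t); exact: a_ge0.
  - by apply/measurable_EFinP; apply: measurable_funM => //; exact: mc.
  - apply/measurable_EFinP; apply: measurable_funD => //.
    apply: measurable_funD => //; apply: measurable_funD => //; exact: ma.
  - by move=> t _; rewrite lee_fin; apply: key => //; apply/andP.
have c0 t : 0 <= c t by apply: le_trans (a_le_c t); exact: a_ge0.
have m12 : measurable_fun setT (fun t => a t + lam * b p1 t).
  by apply: measurable_funD => //; exact: ma.
have m123 : measurable_fun setT (fun t => a t + lam * b p1 t + (1 - lam) * b p2 t).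
  exact: measurable_funD.
have n1 t : 0 <= lam * b p1 t by rewrite mulr_ge0 ?b_ge0.
have n2 t : 0 <= (1 - lam) * b p2 t by rewrite mulr_ge0 ?b_ge0.
have n12 t : 0 <= a t + lam * b p1 t by rewrite addr_ge0 ?a_ge0.
have n123 t : 0 <= a t + lam * b p1 t + (1 - lam) * b p2 t by rewrite addr_ge0.
rewrite (@intZ ((2 + s) / 4) c cs0 mc c0) in H.
rewrite (@intD _ _ m123 mi n123 (indic_ge0 _)) in H.
rewrite (@intD _ _ m12 mlb2 n12 n2) in H.
rewrite (@intD _ _ ma mlb1 a_ge0 n1) in H.
rewrite (@intZ lam (b p1) l0 (mb p1) (b_ge0 p1)) in H.
rewrite (@intZ (1 - lam) (b p2) l1' (mb p2) (b_ge0 p2)) in H.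
rewrite int_ind // in H.
move: H; rewrite -(fineK Ic_fin) -(fineK Ia_fin) -(fineK (Ib_fin p10)) -(fineK (Ib_fin p20)).
by rewrite -!EFinM -!EFinD lee_fin.
Qed.


Lemma final : (((2 + s) / 4)%:E <= best_ratio F)%E.
Proof.
apply/lee_addgt0Pr => e e0.
have Ofin := Ic_fin.
have O0 : 0 < fine Ic.
  apply: lt_le_trans Ia_gt0 _; rewrite -lee_fin !fineK ?Ia_fin //; exact: Ia_le_Ic.
have HW p : 0 <= p -> fine (welfare F p) = fine Ia + fine (Ib p).
  move=> p0; rewrite /welfare IA IB fineD //; [exact: Ia_fin | exact: Ib_fin].
have HO : fine (opt_welfare F) = fine Ic by rewrite /opt_welfare IC.
have [p1 [p2 [lam [p10 p12 dp /andP[l0 l1] [hq1 hq2]]]]] := choose (mulr_gt0 e0 O0).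
have C := @comb p1 p2 lam p10 p12 (ltac:(by apply/andP)) hq1 hq2.
have p20 : 0 <= p2 by exact: le_trans p12.
have [p [p0 Hp]] : exists p, 0 <= p /\
    (2 + s) / 4 <= fine (welfare F p) / fine (opt_welfare F) + e.
  rewrite HO.
  suff [p [p0 Hp]] : exists p, 0 <= p /\ (2 + s) / 4 * fine Ic <= fine (welfare F p) + e * fine Ic.
    exists p; split => //.
    have : (2 + s) / 4 - e <= fine (welfare F p) / fine Ic.
      by rewrite ler_pdivlMr // mulrBl; lra.
    lra.
  have l1' : 0 <= 1 - lam by lra.
  have [h|h] := leP (fine (Ib p2)) (fine (Ib p1)).
    exists p1; split => //; rewrite HW //.
    have : (1 - lam) * fine (Ib p2) <= (1 - lam) * fine (Ib p1) by apply: ler_wpM2l.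
    nra.
  exists p2; split => //; rewrite HW //.
  have : lam * fine (Ib p1) <= lam * fine (Ib p2) by apply: ler_wpM2l => //; exact: ltW.
  nra.
apply: (@le_trans _ _ ((fine (welfare F p) / fine (opt_welfare F))%:E + e%:E)%E).
  by rewrite -EFinD lee_fin.
apply: leeD2r; apply: ereal_sup_ubound; exists p => //.
by rewrite /= in_itv /= p0.
Qed.

End Main.

Theorem lemma7 (R : realType) (F : probability R R) :
  in_DeltaL1 F ->
  (((2 + Num.sqrt 2) / 4)%:E <= best_ratio F)%E.
Proof. by move=> [supp [integ nz]]; exact: (final supp integ nz). Qed.
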